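(* Let $B$ be an affine domain over an infinite field $k$. Let $f \in B$ be such that $f - \lambda$ is a prime element of $B$ for infinitely many $\lambda \in k$. Let $\phi : B \to B[U]$ be a non-trivial exponential map on $B$ such that $f \in B^{\phi}$. Then there exists $\beta \in k$ such that $f-\beta$ is a prime element of $B$ and $\phi$ induces a non-trivial exponential map on $B/(f-\beta)B$, i.e. the composite $B \xrightarrow{\phi} B[U] \to (B/(f-\beta)B)[U]$ factors through a map $\phi_1 : B/(f-\beta)B \to (B/(f-\beta)B)[U]$ which is a non-trivial exponential map.
   Context: For a $k$-algebra $A$ and an indeterminate $U$ over $A$, a $k$-algebra homomorphism $\phi = \phi_U : A \to A[U]$ is an exponential map on $A$ if (i) $\varepsilon_0 \circ \phi_U$ is the identity of $A$, where $\varepsilon_0 : A[U]\to A$ is evaluation at $U=0$; and (ii) $\phi_V \circ \phi_U = \phi_{V+U}$, where $\phi_V: A \to A[V]$ (same map with $U$ replaced by another indeterminate $V$) is extended to $A[U] \to A[V,U]$ by $\phi_V(U)=U$. The ring of invariants is $A^{\phi} = \{a\in A : \phi(a) = a\}$, and $\phi$ is non-trivial if $A^\phi \neq A$. *)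

(* Defs.v *)
From HB Require Import structures.
From mathcomp Require Import all_boot all_order all_algebra.
From mathcomp Require mpoly.
Set Implicit Arguments. Unset Strict Implicit. Unset Printing Implicit Defensive.
Import Order.TTheory GRing.Theory Num.Theory.
Local Open Scope ring_scope.

Section Defs.
Variable k : fieldType.

Definition infinite_field := forall s : seq k, exists x : k, x \notin s.

Variable A : comAlgType k.

Definition divides (a b : A) := exists c : A, b = a * c.
Definition is_unit_elt (a : A) := exists c : A, a * c = 1.
Definition prime_elt (p : A) :=
  [/\ p != 0, ~ is_unit_elt p &
      forall b c : A, divides p (b * c) -> divides p b \/ divides p c].

Definition is_domain :=
  (1 : A) != 0 /\ forall a b : A, a * b = 0 -> a = 0 \/ b = 0.

Definition fin_gen_alg :=
  exists (n : nat) (g : 'I_n -> A),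
    forall b : A, exists p : mpoly.mpoly n k, b = mpoly.mmap (in_alg A) g p.

Definition affine_domain := is_domain /\ fin_gen_alg.

(* For condition (ii), A[V,U] is modelled as {poly {poly A}}: the inner
   variable is V (= 'X%:P) and the outer variable is U (= 'X).  Then
   phi_V (phi_U a) = map_poly phi (phi a), and
   phi_{V+U} a = sum_j b_j (V+U)^j where phi a = sum_j b_j U^j. *)
Definition is_exponential_map (phi : {rmorphism A -> {poly A}}) :=
  [/\ (forall c : k, phi (c%:A) = (c%:A)%:P),
      (forall a : A, (phi a).[0] = a) &
      (forall a : A, map_poly phi (phi a) =
         (map_poly (fun b : A => (b%:P)%:P : {poly {poly A}}) (phi a))
           .[('X : {poly A})%:P + 'X])].

Definition exp_invariant (phi : {rmorphism A -> {poly A}}) (a : A) := phi a = a%:P.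
Definition nontrivial_exp (phi : {rmorphism A -> {poly A}}) := exists a : A, ~ exp_invariant phi a.

End Defs.

Definition is_quotient_by (k : fieldType) (B Q : comAlgType k)
    (a : B) (pi : {rmorphism B -> Q}) :=
  [/\ (forall c : k, pi (c%:A) = c%:A),
      (forall q : Q, exists b : B, pi b = q) &
      (forall b : B, pi b = 0 <-> divides a b)].

(* Main.v *)
Require Import Defs.
From HB Require Import structures.
From mathcomp Require Import all_boot all_order all_algebra.
From mathcomp Require Import zify ring.
From mathcomp Require mpoly.
From Stdlib Require Import Classical ClassicalEpsilon.
Import GRing.Theory.
Local Open Scope ring_scope.
Section Span.
Variable R : comNzRingType.

Definition ideal (I : R -> Prop) :=
  [/\ I 0, (forall x y, I x -> I y -> I (x + y)) & (forall a x, I x -> I (a * x))].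

Fixpoint ispan (s : seq R) (x : R) : Prop :=
  if s is a :: s' then exists r, ispan s' (x - r * a) else x = 0.

Definition noetherian := forall I, ideal I ->
  exists s : seq R, (forall y, y \in s -> I y) /\ (forall x, I x -> ispan s x).

Lemma ispan0 s : ispan s 0.
Proof. by elim: s => [|a s IH] //=; exists 0; rewrite mul0r subr0. Qed.

Lemma ispanD s x y : ispan s x -> ispan s y -> ispan s (x + y).
Proof.
elim: s x y => [|a s IH] x y /=; first by move=> -> ->; rewrite addr0.
move=> [r Hr] [r' Hr']; exists (r + r').
by have := IH _ _ Hr Hr'; congr ispan; rewrite mulrDl opprD addrACA.
Qed.

Lemma ispanM s a x : ispan s x -> ispan s (a * x).
Proof.
elim: s x => [|b s IH] x /=; first by move=> ->; rewrite mulr0.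
move=> [r Hr]; exists (a * r); have := IH _ Hr.
by rewrite mulrBr mulrA.
Qed.

Lemma ispanN s x : ispan s x -> ispan s (- x).
Proof. by move=> H; rewrite -mulN1r; apply: ispanM. Qed.

Lemma ispan_ideal s : ideal (ispan s).
Proof. split; [exact: ispan0 | exact: ispanD | exact: ispanM]. Qed.

Lemma ispan_cons a s x : ispan s x -> ispan (a :: s) x.
Proof. by move=> H; exists 0; rewrite mul0r subr0. Qed.

Lemma ispan_cat s t x : ispan s x -> ispan (s ++ t) x.
Proof.
elim: s x => [|a s IH] x /=; first by move=> ->; apply: ispan0.
by move=> [r Hr]; exists r; apply: IH.
Qed.

Lemma ispan_mem s y : y \in s -> ispan s y.
Proof.
elim: s => [|a s IH] //=; rewrite inE => /orP [/eqP ->|/IH H].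
  by exists 1; rewrite mul1r subrr; apply: ispan0.
exact: ispan_cons.
Qed.

Lemma ispan_sub I s x : ideal I -> (forall y, y \in s -> I y) -> ispan s x -> I x.
Proof.
move=> [I0 ID IM]; elim: s x => [|a s IH] x /=; first by move=> _ ->.
move=> Hs [r Hr].
have -> : x = (x - r * a) + r * a by rewrite subrK.
apply: ID; first by apply: IH => // y Hy; apply: Hs; rewrite inE Hy orbT.
by apply: IM; apply: Hs; rewrite inE eqxx.
Qed.

Lemma bound_chain (L : nat -> R -> Prop) :
  (forall n m x, (n <= m)%N -> L n x -> L m x) ->
  forall t : seq R, (forall y, y \in t -> exists n, L n y) ->
  exists N, forall y, y \in t -> L N y.
Proof.
move=> Hmono; elim=> [|a t IH] H; first by exists 0%N.
have [na Ha] := H a (mem_head _ _).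
have [N HN] : exists N, forall y, y \in t -> L N y.
  by apply: IH => y Hy; apply: H; rewrite inE Hy orbT.
exists (maxn na N) => y; rewrite inE => /orP [/eqP ->|Hy].
  by apply: Hmono (Ha); rewrite leq_maxl.
by apply: Hmono (HN _ Hy); rewrite leq_maxr.
Qed.

End Span.
Arguments ispan {R}.
Arguments ideal {R}.
Arguments noetherian R : clear implicits.
Arguments ispan0 {R}.
Arguments ispanD {R s x y}.
Arguments ispanM {R s} a {x}.
Arguments ispanN {R s x}.
Arguments ispan_cat {R s} t {x}.
Arguments ispan_mem {R s y}.
Arguments ispan_sub {R I s x}.
Arguments ispan_cons {R} a {s x}.
Arguments ispan_ideal {R}.
Arguments bound_chain {R}.

Lemma ispan_map (R S : comNzRingType) (h : {rmorphism R -> S}) s x :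
  ispan s x -> ispan (map h s) (h x).
Proof.
elim: s x => [|a s IH] x /=; first by move=> ->; rewrite rmorph0.
by move=> [r Hr]; exists (h r); have := IH _ Hr; rewrite rmorphB rmorphM.
Qed.

Lemma noeth_image (R S : comNzRingType) (h : {rmorphism R -> S}) :
  (forall y, exists x, h x = y) -> noetherian R -> noetherian S.
Proof.
move=> Hs NR I [I0 ID IM].
have HI' : ideal (fun x => I (h x)).
  split; first by rewrite rmorph0.
    by move=> x y Hx Hy; rewrite rmorphD; apply: ID.
  by move=> a x Hx; rewrite rmorphM; apply: IM.
have [s [Hs1 Hs2]] := NR _ HI'.
exists (map h s); split.
  by move=> y /mapP [x Hx ->]; apply: Hs1.
move=> y Hy; have [x Hx] := Hs y; rewrite -Hx; apply: ispan_map; apply: Hs2.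
by rewrite Hx.
Qed.

Lemma noeth_field (F : fieldType) : noetherian F.
Proof.
move=> I [I0 ID IM].
case: (classic (exists x, I x /\ x != 0)) => [[x [Hx Hx0]]|Hno].
  exists [:: 1]; split.
    move=> y; rewrite inE => /eqP ->.
    by rewrite -(mulVf Hx0); apply: IM.
  move=> y _; exists y; by rewrite mulr1 subrr.
exists [::]; split => // y Hy /=.
have [//|Hy0] := eqVneq y 0; exfalso; apply: Hno; by exists y.
Qed.

Lemma min_exists (T : Type) (m : T -> nat) (P : T -> Prop) :
  (exists x, P x) -> exists x, P x /\ forall y, P y -> (m x <= m y)%N.
Proof.
move=> [x0 H0].
suff: forall n x, (m x <= n)%N -> P x -> exists x, P x /\ forall y, P y -> (m x <= m y)%N.
  by move=> H; exact: (H _ x0 (leqnn _) H0).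
elim=> [|n IH] x Hx Px.
  exists x; split => // y _; by rewrite (leq_trans Hx).
case: (classic (exists y, P y /\ (m y < m x)%N)) => [[y [Py Hy]]|Hno].
  by apply: (IH y) => //; rewrite -ltnS (leq_trans Hy).
exists x; split => // y Py; rewrite leqNgt; apply/negP => Hy; apply: Hno.
by exists y.
Qed.

Lemma natL1 z m i : (z <= m)%N -> (m <= i)%N -> (z <= i - (m - z))%N.
Proof. lia. Qed.
Lemma natL2 z m : (0 < m)%N -> (m.-1 < m - z)%N -> z = 0%N.
Proof. lia. Qed.
Lemma natL3 z m : (0 < m)%N -> (z <= m)%N -> ~~ (m.-1 < m - z)%N -> (m.-1 - (m - z) = z.-1)%N.
Proof. lia. Qed.

Lemma lc_comb (R : comNzRingType) (s : seq {poly R}) m a :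
  (0 < m)%N -> (forall h, h \in s -> (size h <= m)%N) ->
  ispan (map lead_coef s) a ->
  exists q, [/\ ispan s q, (size q <= m)%N & q`_m.-1 = a].
Proof.
elim: s a => [|h s IH] a Hm Hs /=.
  move=> ->; exists 0; split; [by [] | by rewrite size_poly0 | by rewrite coef0].
move=> [r Hr].
have Hs' : forall y, y \in s -> (size y <= m)%N by move=> y Hy; apply: Hs; rewrite inE Hy orbT.
have [q' [Hq1 Hq2 Hq3]] := IH _ Hm Hs' Hr.
have Hh := Hs h (mem_head _ _).
set j := (m - size h)%N.
exists (q' + r *: ('X^j * h)); split.
- by exists (r%:P * 'X^j); rewrite -mulrA mul_polyC addrK.
- rewrite (leq_trans (size_add _ _)) // geq_max Hq2 /=.
  apply/leq_sizeP => i Hi; rewrite coefZ coefXnM; case: ifP => _; first by rewrite mulr0.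
  by rewrite nth_default ?mulr0 //; apply: natL1.
- rewrite coefD Hq3 coefZ coefXnM; case: ifP => Hc.
    have -> : h = 0 by apply/eqP; rewrite -size_poly_eq0; apply/eqP; exact: natL2 Hm Hc.
    by rewrite lead_coef0 !mulr0 subr0 addr0.
  have -> : (m.-1 - j = (size h).-1)%N by apply: natL3 => //; rewrite Hc.
  by rewrite -lead_coefE subrK.
Qed.

Lemma size_drop_lc (R : comNzRingType) (p : {poly R}) m :
  (0 < m)%N -> (size p <= m)%N -> p`_m.-1 = 0 -> (size p < m)%N.
Proof.
move=> Hm; rewrite leq_eqVlt => /orP [/eqP Hs|//] Hc.
have : lead_coef p = 0 by rewrite lead_coefE Hs.
by move/eqP; rewrite lead_coef_eq0 => /eqP Hp; move: Hs; rewrite Hp size_poly0 => Hs; rewrite -Hs in Hm.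
Qed.

Lemma noeth_poly (R : comNzRingType) : noetherian R -> noetherian {poly R}.
Proof.
move=> NR I HI; have [I0 ID IM] := HI.
apply: NNPP => Hno.
have Hex : forall s, (forall y, y \in s -> I y) -> exists g, I g /\ ~ ispan s g.
  move=> s Hs; apply: NNPP => Hng; apply: Hno; exists s; split => // x Hx.
  by apply: NNPP => Hx'; apply: Hng; exists x.
pose Pn s g := I g /\ ~ ispan s g.
have Hnext : forall s, exists g, (forall y, y \in s -> I y) ->
    Pn s g /\ forall h, Pn s h -> (size g <= size h)%N.
  move=> s; case: (classic (forall y, y \in s -> I y)) => Hs.
    have [g [Hg1 Hg2]] := @min_exists _ (fun p : {poly R} => size p) _ (Hex s Hs); by exists g.
  by exists 0.
pose next s := proj1_sig (constructive_indefinite_description _ (Hnext s)).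
have nextP : forall s, (forall y, y \in s -> I y) ->
    Pn s (next s) /\ forall h, Pn s h -> (size (next s) <= size h)%N.
  move=> s; exact: (proj2_sig (constructive_indefinite_description _ (Hnext s))).
pose S n := iter n (fun s => rcons s (next s)) [::].
have SS : forall n, S n.+1 = rcons (S n) (next (S n)) by [].
have SI : forall n y, y \in S n -> I y.
  elim=> [|n IH] y //; rewrite SS -cats1 mem_cat => /orP [/IH //|].
  by rewrite inE => /eqP ->; exact: (nextP _ IH).1.1.
have Spre : forall n m, (n <= m)%N -> exists t, S m = S n ++ t.
  move=> n m /subnK <-; elim: (m - n)%N => [|d [t Ht]]; first by exists [::]; rewrite cats0.
  exists (rcons t (next (S (d + n)))); by rewrite addSn SS -rcons_cat -Ht.
have Smem : forall n y, y \in S n -> exists j, (j < n)%N /\ y = next (S j).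
  elim=> [|n IH] y //; rewrite SS -cats1 mem_cat => /orP [/IH [j [Hj ->]]|].
    by exists j; split => //; rewrite ltnS ltnW.
  by rewrite inE => /eqP ->; exists n.
have Sspan : forall n m x, (n <= m)%N -> ispan (S n) x -> ispan (S m) x.
  by move=> n m x /Spre [t ->]; exact: ispan_cat.
have Lmono : forall n m x, (n <= m)%N -> ispan (map lead_coef (S n)) x ->
    ispan (map lead_coef (S m)) x.
  by move=> n m x /Spre [t ->]; rewrite map_cat; exact: ispan_cat.
pose J a := exists n, ispan (map lead_coef (S n)) a.
have HJ : ideal J.
  split.
  - by exists 0%N; apply: ispan0.
  - move=> x y [n Hn] [m Hm]; exists (maxn n m); apply: ispanD.
      by apply: Lmono Hn; rewrite leq_maxl.
    by apply: Lmono Hm; rewrite leq_maxr.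
  - by move=> a x [n Hn]; exists n; exact: ispanM.
have [t [Ht1 Ht2]] := NR J HJ.
have [N HN] := @bound_chain _ _ Lmono _ Ht1.
have SNI := SI N.
have [[Ig Ng] Mg] := nextP _ SNI.
move: Ig Ng Mg; move gE: (next (S N)) => g Ig Ng Mg.
have Jg : J (lead_coef g).
  exists N.+1; rewrite SS gE -cats1 map_cat; apply: ispan_mem.
  by rewrite mem_cat /= inE eqxx orbT.
have Lg : ispan (map lead_coef (S N)) (lead_coef g).
  exact: (ispan_sub (ispan_ideal _) HN (Ht2 _ Jg)).
have gnz : (0 < size g)%N.
  by rewrite size_poly_gt0; apply/eqP => g0; apply: Ng; rewrite g0; apply: ispan0.
have Hsz : forall h, h \in S N -> (size h <= size g)%N.
  move=> h /Smem [j [Hj ->]]; apply: (nextP _ (SI j)).2; split => // Hsp.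
  by apply: Ng; apply: Sspan (ltnW Hj) Hsp.
have [q [Hq1 Hq2 Hq3]] := @lc_comb _ _ _ _ gnz Hsz Lg.
have Hg' : Pn (S N) (g - q).
  split.
  - apply: ID => //; rewrite -mulN1r; apply: IM; exact: ispan_sub HI SNI Hq1.
  - move=> Hs; apply: Ng; have -> : g = (g - q) + q by rewrite subrK.
    exact: ispanD.
have := Mg _ Hg'; rewrite leqNgt => /negP; apply.
apply: size_drop_lc => //.
  by rewrite (leq_trans (size_add _ _)) // geq_max leqnn size_opp Hq2.
by rewrite coefB Hq3 -lead_coefE subrr.
Qed.

Section FG.
Variable k : fieldType.
Fixpoint ipoly (m : nat) : comNzRingType :=
  if m is m'.+1 then {poly ipoly m'} else k.

Lemma noeth_ipoly m : noetherian (ipoly m).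
Proof. elim: m => [|m IH] /=; [exact: noeth_field | exact: noeth_poly]. Qed.

Variable B : comAlgType k.
Fixpoint iev (gs : seq B) : {rmorphism ipoly (size gs) -> B} :=
  match gs return {rmorphism ipoly (size gs) -> B} with
  | [::] => in_alg B
  | g :: gs' => horner_morph (fun x => mulrC g (iev gs' x))
  end.

Definition Rg gs (b : B) := exists p, iev gs p = b.

Lemma Rg_cons g gs b : Rg gs b -> Rg (g :: gs) b.
Proof. by move=> [p <-]; exists p%:P; rewrite /= horner_morphC. Qed.

Lemma Rg_alg gs c : Rg gs (c%:A).
Proof. elim: gs => [|g gs IH]; [by exists c | exact: Rg_cons]. Qed.

Lemma Rg_mem gs y : y \in gs -> Rg gs y.
Proof.
elim: gs => [|g gs IH] //; rewrite inE => /orP [/eqP ->|/IH]; last exact: Rg_cons.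
by exists 'X; rewrite /= horner_morphX.
Qed.

Lemma Rg_D gs x y : Rg gs x -> Rg gs y -> Rg gs (x + y).
Proof. by move=> [p <-] [q <-]; exists (p + q); rewrite rmorphD. Qed.
Lemma Rg_M gs x y : Rg gs x -> Rg gs y -> Rg gs (x * y).
Proof. by move=> [p <-] [q <-]; exists (p * q); rewrite rmorphM. Qed.
Lemma Rg_X gs x e : Rg gs x -> Rg gs (x ^+ e).
Proof. by move=> [p <-]; exists (p ^+ e); rewrite rmorphXn. Qed.

Lemma Rg_mmap n (g : 'I_n -> B) gs (p : mpoly.mpoly n k) :
  (forall i, g i \in gs) -> Rg gs (mpoly.mmap (in_alg B) g p).
Proof.
move=> Hg; rewrite /mpoly.mmap.
elim/big_ind: _ => [|x y|m _]; first by exists 0; rewrite rmorph0.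
  exact: Rg_D.
apply: Rg_M; first exact: Rg_alg.
rewrite /mpoly.mmap1; elim/big_ind: _ => [|x y|i _]; first by exists 1; rewrite rmorph1.
  exact: Rg_M.
by apply: Rg_X; apply: Rg_mem.
Qed.

Lemma noeth_fg : fin_gen_alg B -> noetherian B.
Proof.
move=> [n [g Hg]].
pose gs := [seq g i | i <- enum 'I_n].
apply: (@noeth_image _ _ (iev gs)); last exact: noeth_ipoly.
move=> b; have [p ->] := Hg b; apply: Rg_mmap => i.
by apply/mapP; exists i => //; rewrite mem_enum.
Qed.
End FG.

Section Chain.
Variable k : fieldType.
Variable A : comAlgType k.
Hypothesis Hdom : is_domain A.

Lemma dom_cancel (x y z : A) : x != 0 -> x * y = x * z -> y = z.
Proof.
move=> Hx E; have : x * (y - z) = 0 by rewrite mulrBr E subrr.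
case/(Hdom.2) => [H|/eqP]; first by rewrite H eqxx in Hx.
by rewrite subr_eq0 => /eqP.
Qed.

Lemma prime_div_prod (p : A) n (F : nat -> A) : prime_elt p ->
  divides p (\prod_(j < n) F j) -> exists j, (j < n)%N /\ divides p (F j).
Proof.
move=> [Hp0 Hpu Hpm]; elim: n => [|n IH].
  by rewrite big_ord0 => [[c Hc]]; exfalso; apply: Hpu; exists c.
rewrite big_ord_recr /= => /Hpm [/IH [j [Hj Hd]]|Hd].
  by exists j; split => //; rewrite ltnS ltnW.
by exists n.
Qed.

Lemma f_lam_ndiv (f : A) (lam mu : k) : lam != mu -> prime_elt (f - lam%:A) ->
  ~ divides (f - lam%:A) (f - mu%:A).
Proof.
move=> Hne [_ Hpu _] [e He]; apply: Hpu.
exists ((e - 1) * (lam - mu)^-1%:A).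
have E1 : (lam - mu)%:A = (f - lam%:A) * (e - 1).
  by rewrite mulrBr mulr1 -He scalerBl; ring.
rewrite mulrA -E1 -scalerAl mul1r scalerA mulfV ?scale1r //.
by rewrite subr_eq0.
Qed.

Lemma exists_good_beta (f c : A) :
  noetherian A -> c != 0 ->
  (forall s : seq k, exists lam : k, lam \notin s /\ prime_elt (f - lam%:A)) ->
  exists beta : k, prime_elt (f - beta%:A) /\ ~ divides (f - beta%:A) c.
Proof.
move=> NA Hc Hlam; apply: NNPP => Hno.
have Hdiv : forall b, prime_elt (f - b%:A) -> divides (f - b%:A) c.
  by move=> b Hb; apply: NNPP => Hn; apply: Hno; exists b.
pose next s := proj1_sig (constructive_indefinite_description _ (Hlam s)).
have nextP : forall s, next s \notin s /\ prime_elt (f - (next s)%:A).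
  by move=> s; exact: (proj2_sig (constructive_indefinite_description _ (Hlam s))).
pose Ls n := iter n (fun s => rcons s (next s)) [::].
pose lam n := next (Ls n).
have LsS : forall n, Ls n.+1 = rcons (Ls n) (lam n) by [].
have lam_in : forall n j, (j < n)%N -> lam j \in Ls n.
  elim=> [|n IH] j //; rewrite ltnS leq_eqVlt => /orP [/eqP ->|Hj];
    rewrite LsS mem_rcons inE ?eqxx // IH ?orbT //.
have lam_neq : forall n j, (j < n)%N -> lam n != lam j.
  move=> n j Hj; apply/eqP => E; have := (nextP (Ls n)).1.
  by rewrite -/(lam n) E lam_in.
have lamP : forall n, prime_elt (f - (lam n)%:A) by move=> n; exact: (nextP _).2.
pose P n := \prod_(j < n) (f - (lam j)%:A).
have PS : forall n, P n.+1 = P n * (f - (lam n)%:A) by move=> n; rewrite /P big_ord_recr.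
have Pdiv : forall n, divides (P n) c.
  elim=> [|n [d Hd]]; first by exists c; rewrite /P big_ord0 mul1r.
  have := Hdiv _ (lamP n); rewrite Hd => Hd2.
  have [Pp Pnu Pm] := lamP n.
  case: (Pm _ _ Hd2) => [Hp|[e He]].
    have [j [Hj Hdj]] := prime_div_prod _ _ (fun j => f - (lam j)%:A) (lamP n) Hp.
    by exfalso; move: Hdj => /=; exact: (f_lam_ndiv _ _ _ (lam_neq n j Hj) (lamP n)).
  by exists e; rewrite PS He mulrA.
have Jid : forall y, ideal (fun x => divides c (y * x)).
  move=> y; split.
  - by exists 0; rewrite !mulr0.
  - by move=> x1 x2 [z1 H1] [z2 H2]; exists (z1 + z2); rewrite mulrDr H1 H2 mulrDr.
  - by move=> a x [z Hz]; exists (a * z); rewrite mulrCA Hz mulrCA.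
have Jmono : forall n m x, (n <= m)%N -> divides c (P n * x) -> divides c (P m * x).
  move=> n m x /subnK <-; elim: (m - n)%N => [|d IH] H //.
  have [z Hz] := IH H; exists (z * (f - (lam (d + n))%:A)).
  by rewrite addSn PS mulrAC Hz -mulrA.
pose J x := exists n, divides c (P n * x).
have HJ : ideal J.
  split.
  - by exists 0%N; exists 0; rewrite !mulr0.
  - move=> x1 x2 [n Hn] [m Hm]; exists (maxn n m).
    have [z1 H1] := Jmono _ _ _ (leq_maxl n m) Hn.
    have [z2 H2] := Jmono _ _ _ (leq_maxr n m) Hm.
    by exists (z1 + z2); rewrite mulrDr H1 H2 mulrDr.
  - by move=> a x [n [z Hz]]; exists n; exists (a * z); rewrite mulrCA Hz mulrCA.
have [t [Ht1 Ht2]] := NA J HJ.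
have [N HN] := bound_chain (fun n x => divides c (P n * x)) Jmono t Ht1.
have [e He] := Pdiv N.+1.
have Je : J e by exists N.+1; exists 1; rewrite -He mulr1.
have [z Hz] : divides c (P N * e) := ispan_sub (Jid (P N)) HN (Ht2 _ Je).
have Hne : P N * e != 0.
  by apply/eqP => H0; move/eqP: Hc; apply; rewrite He PS mulrAC H0 mul0r.
have E1 : P N * e * 1 = P N * e * ((f - (lam N)%:A) * z).
  by rewrite {1}mulr1 {1}Hz He PS; ring.
have [_ Hu _] := lamP N; apply: Hu; exists z.
by rewrite -(dom_cancel _ _ _ Hne E1).
Qed.
End Chain.

Definition pk (Q : comNzRingType) (h : Q -> {poly Q}) (H1 : zmod_morphism h)
  (H2 : monoid_morphism h) : {rmorphism Q -> {poly Q}} :=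
  HB.pack h (GRing.isZmodMorphism.Build _ _ h H1) (GRing.isMonoidMorphism.Build _ _ h H2).
Lemma pkE Q h H1 H2 x : @pk Q h H1 H2 x = h x. Proof. by []. Qed.

Theorem lemma3p3 (k : fieldType) (B : comAlgType k) (f : B)
    (phi : {rmorphism B -> {poly B}}) :
  infinite_field k ->
  affine_domain B ->
  (forall s : seq k, exists lam : k, lam \notin s /\ prime_elt (f - lam%:A)) ->
  is_exponential_map phi ->
  nontrivial_exp phi ->
  exp_invariant phi f ->
  exists beta : k, prime_elt (f - beta%:A) /\
    forall (Q : comAlgType k) (pi : {rmorphism B -> Q}),
      is_quotient_by (f - beta%:A) pi ->
      exists phi1 : {rmorphism Q -> {poly Q}},
        [/\ is_exponential_map phi1,
            (forall b : B, phi1 (pi b) = map_poly pi (phi b)) &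
            nontrivial_exp phi1].
Proof.
move=> _ [Hdom Hfg] Hlam [Hk Hi Hii] [a0 Ha0] Hf.
have NB := @noeth_fg k B Hfg.
have [i Hc] : exists i, (phi a0 - a0%:P)`_i != 0.
  apply: NNPP => H; apply: Ha0; apply/eqP; rewrite -subr_eq0; apply/eqP/polyP => i.
  rewrite coef0; apply/eqP; apply: NNPP => Hn; apply: H; exists i; exact/negP.
have [beta [Hpb Hnd]] := @exists_good_beta k B Hdom f _ NB Hc Hlam.
exists beta; split => // Q pi [Hpik Hsurj Hker].
have Hphi_fb : phi (f - beta%:A) = (f - beta%:A)%:P by rewrite rmorphB Hf Hk polyCB.
have pfb : pi (f - beta%:A) = 0 by apply/Hker; exists 1; rewrite mulr1.
have Hwd : forall b b', pi b = pi b' -> map_poly pi (phi b) = map_poly pi (phi b').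
  move=> b b' E; have : pi (b - b') = 0 by rewrite rmorphB E subrr.
  move/Hker => [e He]; apply/eqP; rewrite -subr_eq0 -rmorphB -rmorphB He rmorphM.
  rewrite Hphi_fb rmorphM /= map_polyC -[X in X%:P * _]/(pi (f - beta%:A)) pfb.
  by rewrite polyC0 mul0r.
have exP : forall q, exists b, pi b == q.
  by move=> q; have [b Hb] := Hsurj q; exists b; apply/eqP.
pose h q := map_poly pi (phi (xchoose (exP q))).
have hE : forall b, h (pi b) = map_poly pi (phi b).
  by move=> b; apply: Hwd; apply/eqP; exact: (xchooseP (exP (pi b))).
have Hadd : zmod_morphism h.
  move=> x y; have [b <-] := Hsurj x; have [b' <-] := Hsurj y.
  by rewrite -rmorphB !hE !rmorphB.
have Hmul : monoid_morphism h.
  split; first by rewrite -(rmorph1 pi) hE !rmorph1.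
  move=> x y; have [b <-] := Hsurj x; have [b' <-] := Hsurj y.
  by rewrite -rmorphM !hE !rmorphM.
pose phi1 := @pk Q h Hadd Hmul.
have p1E : forall b, phi1 (pi b) = map_poly pi (phi b) by move=> b; rewrite pkE hE.
have EE : forall p : {poly B},
    map_poly (map_poly (map_poly pi)) (map_poly (fun b0 : B => (b0%:P)%:P : {poly {poly B}}) p)
    = map_poly (fun q : Q => (q%:P)%:P : {poly {poly Q}}) (map_poly pi p).
  move=> p; apply/polyP => j; rewrite coef_map coef_map_id0; last by rewrite /= !polyC0.
  rewrite coef_map_id0; last by rewrite /= !polyC0.
  rewrite coef_map -[LHS]/(map_poly (map_poly pi) (((p`_j)%:P)%:P)).
  rewrite map_polyC; congr (_%:P); exact: map_polyC.
exists phi1; split => //.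
- split.
  + move=> c0; rewrite -{1}(Hpik c0) p1E Hk map_polyC; congr (_%:P); exact: Hpik.
  + move=> q; have [b <-] := Hsurj q.
    by rewrite p1E -(rmorph0 pi) horner_map Hi.
  + move=> q; have [b <-] := Hsurj q.
    rewrite p1E -map_poly_comp.
    rewrite (eq_map_poly (g := map_poly pi \o phi)); last by move=> x; exact: p1E.
    rewrite map_poly_comp Hii -horner_map.
    have HY : map_poly (map_poly pi) ('X%:P : {poly {poly B}}) = 'X%:P by rewrite map_polyC; congr (_%:P); exact: map_polyX.
    rewrite rmorphD /= map_polyX HY.
    exact: (congr1 (fun p => p.['X%:P + 'X]) (EE (phi b))).
- exists (pi a0); rewrite /exp_invariant p1E => E.
  have : map_poly pi (phi a0 - a0%:P) = 0 by rewrite rmorphB /= map_polyC E subrr.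
  move=> H0; have := congr1 (fun p : {poly Q} => p`_i) H0; rewrite coef_map coef0 => /Hker; exact: Hnd.
Qed.
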